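(* For every $\epsilon>0$ and every $\mathbf{x}=(x,y,z)\in\mathbb{R}^3\setminus N$, $$\frac{\partial R_\epsilon}{\partial z}(\mathbf{x})=0\iff z=0 .$$
   Context: Fix $\mu>0$, $\lambda>0$, $e\in(0,1)$ and set $a=\lambda^2/\mu$. For $\mathbf{x}=(x,y,z)\in\mathbb{R}^3$ with Euclidean norm $|\mathbf{x}|$ let $\nu(\mathbf{x})=\frac{\mu}{\lambda^2}\big(|\mathbf{x}|-\frac{x}{e}-\frac{\mathrm{i}y\sqrt{1-e^2}}{e}\big)\in\mathbb{C}$. $\sqrt{\cdot}$ denotes the principal branch of the complex square root (cut along $(-\infty,0]$). Let $N=\{0\}\cup\{\mathbf{x}: y=0,\ \nu(\mathbf{x})\in[0,4]\}$ (a closed Lebesgue-null set). For $\epsilon>0$ define on $\mathbb{R}^3\setminus N$ the real analytic function $$R_\epsilon(\mathbf{x})=\frac{\lambda}{\epsilon^2}\Big[\ln|\nu|+2\ln\big|1+\sqrt{1-4/\nu}\big|-\frac{\mu|\mathbf{x}|}{\lambda^2}+\tfrac12\operatorname{Re}\big(\nu(1-\sqrt{1-4/\nu})\big)\Big],$$ i.e. $R_\epsilon=\operatorname{Re}\log\psi_\epsilon$ for the limiting wave function $\psi_\epsilon=\nu^{\lambda/\epsilon^2}(1+\sqrt{1-4/\nu})^{2\lambda/\epsilon^2}\exp\big(-\frac{\mu|\mathbf{x}|}{\lambda\epsilon^2}+\frac{\lambda\nu}{2\epsilon^2}(1-\sqrt{1-4/\nu})\big)$. Put $R:=\epsilon^2R_\epsilon$,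 which is independent of $\epsilon$. *)

(* Defs.v *)
From Stdlib Require Import Reals.
Open Scope R_scope.

Definition C : Type := (R * R)%type.
Definition Cre (w : C) : R := fst w.
Definition Cim (w : C) : R := snd w.
Definition Cof (r : R) : C := (r, 0).
Definition Cadd (u v : C) : C := (fst u + fst v, snd u + snd v).
Definition Csub (u v : C) : C := (fst u - fst v, snd u - snd v).
Definition Cmul (u v : C) : C :=
  (fst u * fst v - snd u * snd v, fst u * snd v + snd u * fst v).
Definition Cmod (w : C) : R := sqrt (fst w ^ 2 + snd w ^ 2).
Definition Cinv (w : C) : C :=
  (fst w / (fst w ^ 2 + snd w ^ 2), - snd w / (fst w ^ 2 + snd w ^ 2)).
Definition Cdiv (u v : C) : C := Cmul u (Cinv v).

(* Principal square root (branch cut along (-oo,0], Re >= 0,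
   and Im >= 0 on the cut). *)
Definition Csqrt (w : C) : C :=
  (sqrt ((Cmod w + fst w) / 2),
   if Rlt_dec (snd w) 0 then - sqrt ((Cmod w - fst w) / 2)
   else sqrt ((Cmod w - fst w) / 2)).

Definition norm3 (x y z : R) : R := sqrt (x ^ 2 + y ^ 2 + z ^ 2).

Definition nu (mu lam e x y z : R) : C :=
  (mu / lam ^ 2 * (norm3 x y z - x / e),
   mu / lam ^ 2 * (- (y * sqrt (1 - e ^ 2) / e))).

Definition inN (mu lam e x y z : R) : Prop :=
  (x = 0 /\ y = 0 /\ z = 0) \/
  (y = 0 /\ Cim (nu mu lam e x y z) = 0 /\
   0 <= Cre (nu mu lam e x y z) <= 4).

Definition sq (mu lam e x y z : R) : C :=
  Csqrt (Csub (Cof 1) (Cdiv (Cof 4) (nu mu lam e x y z))).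

Definition Reps (mu lam e eps x y z : R) : R :=
  let v := nu mu lam e x y z in
  let s := sq mu lam e x y z in
  lam / eps ^ 2 *
  ( ln (Cmod v) + 2 * ln (Cmod (Cadd (Cof 1) s))
    - mu * norm3 x y z / lam ^ 2
    + / 2 * Cre (Cmul v (Csub (Cof 1) s)) ).

(* Main.v *)
Require Import Defs.
From Stdlib Require Import Reals Lra Psatz.
Open Scope R_scope.

Lemma d_ext f g x l : (forall t, f t = g t) -> derivable_pt_lim g x l -> derivable_pt_lim f x l.
Proof. intros H D eps He. destruct (D eps He) as [d Hd]. exists d. intros h h0 hd.
rewrite !H. apply Hd; auto. Qed.

Lemma d_local f g x l d : 0 < d -> (forall t, Rabs (t - x) < d -> f t = g t) ->
  derivable_pt_lim g x l -> derivable_pt_lim f x l.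
Proof. intros Hd0 H D eps He. destruct (D eps He) as [d' Hd].
assert (Hm : 0 < Rmin d d') by (apply Rmin_pos; [lra| apply cond_pos]).
exists (mkposreal _ Hm). intros h h0 hd. simpl in hd.
rewrite (H x), (H (x+h)). apply Hd; auto. apply Rlt_le_trans with (1:=hd); apply Rmin_r.
replace (x+h-x) with h by ring. apply Rlt_le_trans with (1:=hd); apply Rmin_l.
replace (x-x) with 0 by ring. rewrite Rabs_R0; lra. Qed.

Lemma d_const k x : derivable_pt_lim (fun _ => k) x 0.
Proof. apply (derivable_pt_lim_const k x). Qed.
Lemma d_id x : derivable_pt_lim (fun t => t) x 1.
Proof. apply derivable_pt_lim_id. Qed.
Lemma d_plus f g x a b : derivable_pt_lim f x a -> derivable_pt_lim g x b ->
  derivable_pt_lim (fun t => f t + g t) x (a + b).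
Proof. intros. apply (derivable_pt_lim_plus f g); auto. Qed.
Lemma d_minus f g x a b : derivable_pt_lim f x a -> derivable_pt_lim g x b ->
  derivable_pt_lim (fun t => f t - g t) x (a - b).
Proof. intros. apply (derivable_pt_lim_minus f g); auto. Qed.
Lemma d_mult f g x a b : derivable_pt_lim f x a -> derivable_pt_lim g x b ->
  derivable_pt_lim (fun t => f t * g t) x (a * g x + f x * b).
Proof. intros. apply (derivable_pt_lim_mult f g); auto. Qed.
Lemma d_opp f x a : derivable_pt_lim f x a -> derivable_pt_lim (fun t => - f t) x (- a).
Proof. intros. apply (derivable_pt_lim_opp f); auto. Qed.
Lemma d_div f g x a b : derivable_pt_lim f x a -> derivable_pt_lim g x b -> g x <> 0 ->
  derivable_pt_lim (fun t => f t / g t) x ((a * g x - b * f x) / (g x)^2).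
Proof. intros. replace ((g x)^2) with (Rsqr (g x)) by (unfold Rsqr; ring).
apply (derivable_pt_lim_div f g); auto. Qed.
Lemma d_pow2 f x a : derivable_pt_lim f x a -> derivable_pt_lim (fun t => f t ^ 2) x (2 * f x * a).
Proof. intros. apply d_ext with (fun t => f t * f t). intros; ring.
replace (2 * f x * a) with (a * f x + f x * a) by ring. apply d_mult; auto. Qed.
Lemma d_sqrt f x a : derivable_pt_lim f x a -> 0 < f x ->
  derivable_pt_lim (fun t => sqrt (f t)) x (/ (2 * sqrt (f x)) * a).
Proof. intros. apply (derivable_pt_lim_comp f sqrt); auto. apply derivable_pt_lim_sqrt; auto. Qed.
Lemma d_ln f x a : derivable_pt_lim f x a -> 0 < f x ->
  derivable_pt_lim (fun t => ln (f t)) x (/ f x * a).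
Proof. intros. apply (derivable_pt_lim_comp f ln); auto. apply derivable_pt_lim_ln; auto. Qed.
Lemma d_comp f g x a b : derivable_pt_lim f x a -> derivable_pt_lim g (f x) b ->
  derivable_pt_lim (fun t => g (f t)) x (b * a).
Proof. intros. apply (derivable_pt_lim_comp f g); auto. Qed.
Lemma d_eq f x l l' : derivable_pt_lim f x l -> l = l' -> derivable_pt_lim f x l'.
Proof. intros; subst; auto. Qed.
Lemma d_inv f x a : derivable_pt_lim f x a -> f x <> 0 ->
  derivable_pt_lim (fun t => / f t) x (- a / (f x)^2).
Proof. intros. apply d_ext with (fun t => 1 / f t). intro; unfold Rdiv; ring.
eapply d_eq. apply d_div; [apply d_const| eauto | auto]. cbv beta; field; auto. Qed.

Definition Pf c x0 r := c * (r - x0).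
Definition Mf c x0 q r := Pf c x0 r ^ 2 + q ^ 2.
Definition Uf c x0 q r := 1 - 4 * Pf c x0 r / Mf c x0 q r.
Definition Vf c x0 q r := 4 * q / Mf c x0 q r.
Definition Sf c x0 q r := sqrt (Uf c x0 q r ^ 2 + Vf c x0 q r ^ 2).
Definition Af c x0 q r := sqrt ((Sf c x0 q r + Uf c x0 q r) / 2).
Definition Bf c x0 q r := if Rlt_dec (Vf c x0 q r) 0 then - sqrt ((Sf c x0 q r - Uf c x0 q r) / 2)
   else sqrt ((Sf c x0 q r - Uf c x0 q r) / 2).
Definition Gf kk c x0 q r :=
  kk * (ln (sqrt (Pf c x0 r ^ 2 + q ^ 2)) + 2 * ln (sqrt ((1 + Af c x0 q r) ^ 2 + (0 + Bf c x0 q r) ^ 2))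
        - c * r + / 2 * (Pf c x0 r * (1 - Af c x0 q r) - q * (0 - Bf c x0 q r))).

Lemma Reps_eq mu lam e eps x y t : lam <> 0 ->
  Reps mu lam e eps x y t =
  Gf (lam / eps ^ 2) (mu / lam ^ 2) (x / e) (mu / lam ^ 2 * (- (y * sqrt (1 - e ^ 2) / e)))
     (norm3 x y t).
Proof.
intro Hl. unfold Reps, sq, nu, Gf.
set (c := mu / lam ^ 2). set (q := c * (- (y * sqrt (1 - e ^ 2) / e))).
set (r := norm3 x y t).
assert (HW : Csub (Cof 1) (Cdiv (Cof 4) (c * (r - x / e), q)) = (Uf c (x/e) q r, Vf c (x/e) q r)).
{ unfold Csub, Cof, Cdiv, Cmul, Cinv, Uf, Vf, Mf, Pf; simpl. f_equal; unfold Rdiv; ring. }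
rewrite HW.
assert (HC : Csqrt (Uf c (x/e) q r, Vf c (x/e) q r) = (Af c (x/e) q r, Bf c (x/e) q r)).
{ reflexivity. }
rewrite HC. replace (mu * r / lam ^ 2) with (c * r) by (unfold c, Rdiv; ring).
unfold Cmod, Cadd, Cof, Cre, Cmul, Csub; cbv beta iota delta [fst snd]. unfold Pf. reflexivity.
Qed.
Lemma S_facts U V : let S := sqrt (U^2+V^2) in 0 <= S /\ S^2 = U^2+V^2 /\ 0 <= S + U /\ 0 <= S - U.
Proof. intro S. assert (h0 : 0 <= S) by apply sqrt_pos.
assert (h1 : S^2 = U^2+V^2) by (apply pow2_sqrt; nra).
repeat split; auto; nra. Qed.

Lemma AB_rel c x0 q r : Af c x0 q r ^2 - Bf c x0 q r ^2 = Uf c x0 q r /\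
   2 * Af c x0 q r * Bf c x0 q r = Vf c x0 q r.
Proof.
unfold Af, Bf, Sf. set (U := Uf c x0 q r). set (V := Vf c x0 q r).
destruct (S_facts U V) as (h0 & h1 & h2 & h3). set (S := sqrt (U^2+V^2)) in *.
assert (hA : sqrt ((S+U)/2) ^2 = (S+U)/2) by (apply pow2_sqrt; lra).
assert (hB : sqrt ((S-U)/2) ^2 = (S-U)/2) by (apply pow2_sqrt; lra).
assert (pA := sqrt_pos ((S+U)/2)). assert (pB := sqrt_pos ((S-U)/2)).
set (a := sqrt ((S+U)/2)) in *. set (b := sqrt ((S-U)/2)) in *.
assert (hsq : (2*a*b)^2 = V^2).
{ replace ((2*a*b)^2) with (4*a^2*b^2) by ring. rewrite hA, hB. nra. }
destruct (Rlt_dec V 0) as [hv|hv]; split.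
- replace ((-b)^2) with (b^2) by ring. lra.
- assert (0 <= a*b) by nra. nra.
- lra.
- assert (0 <= a*b) by nra. nra.
Qed.
Lemma alg : forall c P q A B dA dB,
  P^2+q^2 <> 0 -> (1+A)^2+B^2 <> 0 -> A^2+B^2 <> 0 ->
  A^2-B^2 = 1 - 4*P/(P^2+q^2) -> 2*A*B = 4*q/(P^2+q^2) ->
  2*A*dA - 2*B*dB = 4*c*(P^2-q^2)/(P^2+q^2)^2 ->
  2*(dA*B + A*dB) = -8*c*P*q/(P^2+q^2)^2 ->
  P*c/(P^2+q^2) + (2*(1+A)*dA + 2*B*dB)/((1+A)^2+B^2) - c
   + /2*(c*(1-A) - P*dA + q*dB) = -c*(1+A)/2.
Proof.
intros c P q A B dA dB HM HN HS E1 E2 E3 E4.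
remember (P^2+q^2) as M eqn:hMe.
assert (hP : P = (1-A^2+B^2)*M/4).
{ replace P with ((4*P/M)*M/4) by (field; auto). rewrite <- (Rplus_0_l (4*P/M)) at 1. 
  replace (0 + 4*P/M) with (1-(1 - 4*P/M)) by ring. rewrite <- E1. field; auto. }
assert (hq : q = (2*A*B)*M/4).
{ rewrite E2. field; auto. }
assert (hdA : dA = (A*(4*c*(P^2-q^2)/M^2) + B*(-8*c*P*q/M^2))/(2*(A^2+B^2))).
{ rewrite <- E3, <- E4. field; auto. }
assert (hdB : dB = (A*(-8*c*P*q/M^2) - B*(4*c*(P^2-q^2)/M^2))/(2*(A^2+B^2))).
{ rewrite <- E3, <- E4. field; auto. }
rewrite hdA, hdB.
rewrite hP, hq in hMe.
set (Q := (1-A^2+B^2)^2 + (2*A*B)^2).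
assert (HQ : M * Q = 16).
{ apply (Rmult_eq_reg_l M); auto. transitivity (16*(((1-A^2+B^2)*M/4)^2+((2*A*B)*M/4)^2)).
  unfold Q; field. rewrite <- hMe; ring. }
assert (HQ0 : Q <> 0). { intro h; rewrite h in HQ; lra. }
replace M with (16/Q) by (rewrite <- HQ; field; auto).
rewrite hP, hq. replace M with (16/Q) by (rewrite <- HQ; field; auto).
unfold Q. field. 
repeat split; auto. Qed.


Ltac dstep := match goal with |- derivable_pt_lim _ _ _ =>
  first [ eassumption | apply d_const | apply d_id | eapply d_plus | eapply d_minus
        | eapply d_pow2 | eapply d_div | eapply d_mult | eapply d_inv | eapply d_opp | eapply d_sqrt | eapply d_ln ] end.

Lemma sq_simp s m X : s <> 0 -> s * s = m -> / s * (/ (2 * s) * X) = X / (2 * m).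
Proof. intros; subst; field; auto. Qed.

Lemma G_deriv kk c x0 q r0 dB :
  Mf c x0 q r0 <> 0 -> 0 < Sf c x0 q r0 + Uf c x0 q r0 ->
  derivable_pt_lim (Bf c x0 q) r0 dB ->
  derivable_pt_lim (Gf kk c x0 q) r0 (kk * (- c * (1 + Af c x0 q r0) / 2)).
Proof.
intros HM HSU HdB.
assert (dP : derivable_pt_lim (Pf c x0) r0 c).
{ eapply d_eq. unfold Pf. repeat dstep. cbv beta; ring. }
assert (dM : derivable_pt_lim (Mf c x0 q) r0 (2 * Pf c x0 r0 * c)).
{ eapply d_eq. unfold Mf. repeat dstep. cbv beta; ring. }
assert (HM' := HM). unfold Mf in HM'.
assert (dU : derivable_pt_lim (Uf c x0 q) r0
   (4 * c * (Pf c x0 r0 ^ 2 - q ^ 2) / (Pf c x0 r0 ^ 2 + q ^ 2) ^ 2)).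
{ eapply d_eq. unfold Uf. repeat dstep. all: cbv beta; auto. unfold Mf; field; auto. }
assert (dV : derivable_pt_lim (Vf c x0 q) r0
   (-8 * c * Pf c x0 r0 * q / (Pf c x0 r0 ^ 2 + q ^ 2) ^ 2)).
{ eapply d_eq. unfold Vf. repeat dstep. all: cbv beta; auto. unfold Mf; field; auto. }
assert (HUV : 0 < Uf c x0 q r0 ^ 2 + Vf c x0 q r0 ^ 2).
{ destruct (Rlt_dec 0 (Uf c x0 q r0 ^ 2 + Vf c x0 q r0 ^ 2)) as [h|h]; auto.
  assert (h0 : Uf c x0 q r0 ^ 2 + Vf c x0 q r0 ^ 2 = 0) by nra.
  assert (hu : Uf c x0 q r0 = 0) by nra.
  unfold Sf in HSU. rewrite h0, sqrt_0, hu in HSU. lra. }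
assert (dS : exists dS, derivable_pt_lim (Sf c x0 q) r0 dS).
{ eexists. unfold Sf. repeat dstep. all: cbv beta; auto. }
destruct dS as [dS HdS].
assert (dA : exists dA, derivable_pt_lim (Af c x0 q) r0 dA).
{ eexists. unfold Af. repeat dstep. all: cbv beta; auto; lra. }
destruct dA as [dA HdA].
assert (E3 : 2 * Af c x0 q r0 * dA - 2 * Bf c x0 q r0 * dB =
   4 * c * (Pf c x0 r0 ^ 2 - q ^ 2) / (Pf c x0 r0 ^ 2 + q ^ 2) ^ 2).
{ apply (uniqueness_limite (fun r => Af c x0 q r ^ 2 - Bf c x0 q r ^ 2) r0).
  eapply d_eq. repeat dstep. cbv beta; ring.
  apply d_ext with (Uf c x0 q); auto. intro t; apply (AB_rel c x0 q t). }
assert (E4 : 2 * (dA * Bf c x0 q r0 + Af c x0 q r0 * dB) =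
   -8 * c * Pf c x0 r0 * q / (Pf c x0 r0 ^ 2 + q ^ 2) ^ 2).
{ apply (uniqueness_limite (fun r => 2 * Af c x0 q r * Bf c x0 q r) r0).
  eapply d_eq. repeat dstep. cbv beta; ring.
  apply d_ext with (Vf c x0 q); auto. intro t; apply (AB_rel c x0 q t). }
destruct (AB_rel c x0 q r0) as [E1 E2].
unfold Uf, Mf in E1. unfold Vf, Mf in E2.
assert (hApos : 0 < Af c x0 q r0) by (unfold Af; apply sqrt_lt_R0; lra).
set (P := Pf c x0 r0) in *. set (A := Af c x0 q r0) in *. set (B := Bf c x0 q r0) in *.
assert (hMp : 0 < P^2+q^2) by (assert (0 <= P^2+q^2) by nra; lra).
assert (hNp : 0 < (1+A)^2+(0+B)^2) by nra.
assert (hsM := sqrt_lt_R0 _ hMp). assert (hsN := sqrt_lt_R0 _ hNp).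
assert (eM := sqrt_sqrt _ (Rlt_le _ _ hMp)). assert (eN := sqrt_sqrt _ (Rlt_le _ _ hNp)).
eapply d_eq. unfold Gf. repeat dstep. all: cbv beta; auto.
fold P A B.
rewrite (sq_simp (sqrt (P^2+q^2)) (P^2+q^2)) by (auto; lra).
rewrite (sq_simp (sqrt ((1+A)^2+(0+B)^2)) ((1+A)^2+(0+B)^2)) by (auto; lra).
transitivity (kk * (P*c/(P^2+q^2) + (2*(1+A)*dA + 2*B*dB)/((1+A)^2+B^2) - c
   + /2*(c*(1-A) - P*dA + q*dB))).
{ replace ((0+B)^2) with (B^2) by ring. field. split; lra. }
rewrite alg; auto; try lra. nra.
Qed.

Lemma UVS_deriv c x0 q r0 : Mf c x0 q r0 <> 0 -> 0 < Uf c x0 q r0 ^ 2 + Vf c x0 q r0 ^ 2 ->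
  (exists dU, derivable_pt_lim (Uf c x0 q) r0 dU) /\ (exists dS, derivable_pt_lim (Sf c x0 q) r0 dS).
Proof.
intros HM HUV.
assert (dP : derivable_pt_lim (Pf c x0) r0 c).
{ eapply d_eq. unfold Pf. repeat dstep. cbv beta; ring. }
assert (dM : derivable_pt_lim (Mf c x0 q) r0 (2 * Pf c x0 r0 * c)).
{ eapply d_eq. unfold Mf. repeat dstep. cbv beta; ring. }
assert (dU : exists dU, derivable_pt_lim (Uf c x0 q) r0 dU).
{ eexists. unfold Uf. repeat dstep. all: cbv beta; auto. }
assert (dV : exists dV, derivable_pt_lim (Vf c x0 q) r0 dV).
{ eexists. unfold Vf. repeat dstep. all: cbv beta; auto. }
destruct dU as [dU HdU]. destruct dV as [dV HdV].
split. eauto.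
eexists. unfold Sf. repeat dstep. all: cbv beta; auto.
Qed.

Lemma B_deriv_qnz c x0 q r0 : q <> 0 ->
  (exists dB, derivable_pt_lim (Bf c x0 q) r0 dB) /\ 0 < Sf c x0 q r0 + Uf c x0 q r0
  /\ Mf c x0 q r0 <> 0.
Proof.
intro hq.
assert (hq2 : 0 < q^2) by (replace (q^2) with (Rsqr q) by (unfold Rsqr; ring); apply Rsqr_pos_lt; auto).
assert (HMp : forall r, 0 < Mf c x0 q r) by (intro r; unfold Mf; nra).
assert (HMi : forall r, 0 < / Mf c x0 q r) by (intro r; apply Rinv_0_lt_compat; auto).
assert (HM : Mf c x0 q r0 <> 0) by (specialize (HMp r0); lra).
assert (HV : Vf c x0 q r0 <> 0).
{ unfold Vf, Rdiv. specialize (HMi r0). intro h. apply Rmult_integral in h. destruct h as [h|h]; [lra|].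
  rewrite h in HMi; lra. }
assert (hV2 : 0 < Vf c x0 q r0 ^ 2)
  by (replace (Vf c x0 q r0 ^2) with (Rsqr (Vf c x0 q r0)) by (unfold Rsqr; ring); apply Rsqr_pos_lt; auto).
destruct (S_facts (Uf c x0 q r0) (Vf c x0 q r0)) as (h0 & h1 & h2 & h3).
fold (Sf c x0 q r0) in h0, h1, h2, h3.
assert (hSU : 0 < Sf c x0 q r0 + Uf c x0 q r0 /\ 0 < Sf c x0 q r0 - Uf c x0 q r0) by (split; nra).
destruct (UVS_deriv c x0 q r0 HM) as [[dU HdU] [dS HdS]]; [nra|].
split; [|split; [tauto|auto]].
destruct (Rlt_dec q 0) as [hneg|hpos].
- eexists. apply d_ext with (fun t => - sqrt ((Sf c x0 q t - Uf c x0 q t) / 2)).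
  { intro t. unfold Bf. destruct (Rlt_dec (Vf c x0 q t) 0) as [|n]; auto.
    exfalso; apply n. unfold Vf, Rdiv. specialize (HMi t). nra. }
  repeat dstep. all: cbv beta; auto; lra.
- eexists. apply d_ext with (fun t => sqrt ((Sf c x0 q t - Uf c x0 q t) / 2)).
  { intro t. unfold Bf. destruct (Rlt_dec (Vf c x0 q t) 0) as [h|n]; auto.
    exfalso. unfold Vf, Rdiv in h. specialize (HMi t). nra. }
  repeat dstep. all: cbv beta; auto; lra.
Qed.

Lemma pt_q0 c x0 t : (Pf c x0 t < 0 \/ 4 < Pf c x0 t) ->
  0 < Uf c x0 0 t /\ Sf c x0 0 t = Uf c x0 0 t /\ Bf c x0 0 t = 0 /\ Mf c x0 0 t <> 0.
Proof.
intro hP. set (P := Pf c x0 t) in *.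
assert (hP0 : P <> 0) by lra.
assert (hP2 : 0 < P^2) by (replace (P^2) with (Rsqr P) by (unfold Rsqr; ring); apply Rsqr_pos_lt; auto).
assert (hU : 0 < Uf c x0 0 t).
{ unfold Uf, Mf. fold P. replace (1 - 4 * P / (P^2 + 0^2)) with (P*(P-4)/(P^2)) by (field; auto).
  apply Rdiv_lt_0_compat; auto. nra. }
assert (hV : Vf c x0 0 t = 0) by (unfold Vf, Rdiv; ring).
assert (hS : Sf c x0 0 t = Uf c x0 0 t).
{ unfold Sf. rewrite hV. replace (Uf c x0 0 t ^ 2 + 0 ^ 2) with (Uf c x0 0 t ^ 2) by ring.
  apply sqrt_pow2; lra. }
split; [auto|split; [auto|split]].
- unfold Bf. rewrite hV. destruct (Rlt_dec 0 0); [lra|]. rewrite hS.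
  replace ((Uf c x0 0 t - Uf c x0 0 t) / 2) with 0 by field. apply sqrt_0.
- unfold Mf. fold P. lra.
Qed.

Lemma B_deriv_q0 c x0 r0 : 0 < c -> (Pf c x0 r0 < 0 \/ 4 < Pf c x0 r0) ->
  derivable_pt_lim (Bf c x0 0) r0 0 /\ 0 < Sf c x0 0 r0 + Uf c x0 0 r0 /\ Mf c x0 0 r0 <> 0.
Proof.
intros hc hP.
destruct (pt_q0 c x0 r0 hP) as (h1 & h2 & h3 & h4).
split; [|split; [lra|auto]].
set (m := Rmax (Pf c x0 r0 - 4) (- Pf c x0 r0)).
assert (hm : 0 < m) by (unfold m; destruct hP; [apply Rlt_le_trans with (- Pf c x0 r0); [lra|apply Rmax_r]
   | apply Rlt_le_trans with (Pf c x0 r0 - 4); [lra|apply Rmax_l]]).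
apply d_local with (fun _ => 0) (m / c).
{ apply Rdiv_lt_0_compat; auto. }
2: apply d_const.
intros t ht. apply Rabs_def2 in ht. destruct ht as [ha hb].
assert (hPt : Pf c x0 t = Pf c x0 r0 + c * (t - r0)) by (unfold Pf; ring).
assert (hct : c * (t - r0) < m /\ - m < c * (t - r0)).
{ split.
  - replace m with (c * (m / c)) by (field; lra). apply Rmult_lt_compat_l; auto.
  - replace m with (c * (m / c)) by (field; lra). nra. }
apply (pt_q0 c x0 t).
destruct hP as [hP|hP].
- left. assert (m = - Pf c x0 r0) by (unfold m; apply Rmax_right; lra). lra.
- right. assert (m = Pf c x0 r0 - 4) by (unfold m; apply Rmax_left; lra). lra.
Qed.

Theorem lemma5p1 :
  forall mu lam e eps x y z : R,
    0 < mu -> 0 < lam -> 0 < e < 1 -> 0 < eps ->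
    ~ inN mu lam e x y z ->
    (derivable_pt_lim (fun t => Reps mu lam e eps x y t) z 0 <-> z = 0).
Proof.
intros mu lam e eps x y z hmu hlam he heps hN.
assert (hl : lam <> 0) by lra.
set (c := mu / lam ^ 2). set (kk := lam / eps ^ 2). set (x0 := x / e).
set (q := c * (- (y * sqrt (1 - e ^ 2) / e))).
assert (hc : 0 < c) by (unfold c; apply Rdiv_lt_0_compat; auto; apply pow_lt; auto).
assert (hkk : 0 < kk) by (unfold kk; apply Rdiv_lt_0_compat; auto; apply pow_lt; auto).
set (r0 := norm3 x y z).
assert (hsum : 0 < x^2+y^2+z^2).
{ destruct (Rlt_dec 0 (x^2+y^2+z^2)) as [h|h]; auto. exfalso. apply hN. left.
  assert (x^2+y^2+z^2 = 0) by nra. repeat split; nra. }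
assert (hr0 : 0 < r0) by (apply sqrt_lt_R0; auto).
assert (hB : (exists dB, derivable_pt_lim (Bf c x0 q) r0 dB) /\ 0 < Sf c x0 q r0 + Uf c x0 q r0
  /\ Mf c x0 q r0 <> 0).
{ destruct (Req_dec q 0) as [hq|hq].
  - assert (hy : y = 0).
    { assert (hs : 0 < sqrt (1 - e^2)) by (apply sqrt_lt_R0; nra).
      unfold q in hq. apply Rmult_integral in hq. destruct hq as [hq|hq]; [lra|].
      assert (y * sqrt (1 - e ^ 2) / e = 0) by lra. unfold Rdiv in H.
      apply Rmult_integral in H. destruct H as [H|H].
      + apply Rmult_integral in H. destruct H; [auto|lra].
      + assert (0 < / e) by (apply Rinv_0_lt_compat; lra). lra. }
    assert (hP : Pf c x0 r0 < 0 \/ 4 < Pf c x0 r0).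
    { assert (eim : Cim (nu mu lam e x y z) = q) by reflexivity.
      assert (ere : Cre (nu mu lam e x y z) = Pf c x0 r0) by reflexivity.
      destruct (Rlt_dec (Pf c x0 r0) 0); [left; auto|].
      destruct (Rlt_dec 4 (Pf c x0 r0)); [right; auto|].
      exfalso. apply hN. right. rewrite eim, ere. repeat split; auto; lra. }
    rewrite hq. destruct (B_deriv_q0 c x0 r0 hc hP) as (h1 & h2 & h3).
    split; [exists 0; auto | auto].
  - apply B_deriv_qnz; auto. }
destruct hB as ([dB HdB] & hSU & hM).
assert (HG := G_deriv kk c x0 q r0 dB hM hSU HdB).
set (L := kk * (- c * (1 + Af c x0 q r0) / 2)) in HG.
assert (hL : L <> 0).
{ assert (0 <= Af c x0 q r0) by (unfold Af; apply sqrt_pos). unfold L.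
  intro h. apply Rmult_integral in h. destruct h; [lra|]. nra. }
assert (Hn : derivable_pt_lim (fun t => norm3 x y t) z (z / r0)).
{ eapply d_eq. unfold norm3. repeat dstep. all: cbv beta; auto.
  fold (norm3 x y z). fold r0. field. lra. }
assert (HD : derivable_pt_lim (fun t => Reps mu lam e eps x y t) z (L * (z / r0))).
{ apply d_ext with (fun t => Gf kk c x0 q (norm3 x y t)).
  { intro t. apply Reps_eq; auto. }
  apply d_comp; auto. }
split.
- intro H0. assert (h := uniqueness_limite _ _ _ _ H0 HD).
  symmetry in h. apply Rmult_integral in h. destruct h as [h|h]; [contradiction|].
  unfold Rdiv in h. apply Rmult_integral in h. destruct h as [h|h]; auto.
  assert (0 < / r0) by (apply Rinv_0_lt_compat; auto). lra.
- intro hz. eapply d_eq. exact HD. rewrite hz. unfold Rdiv; ring.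
Qed.
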